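(* Every $k$-colorable graph of pathwidth at most $p$ is $p(k-1)$-almost equitably $k$-colorable.
   Context: A $k$-coloring is equitable if its $k$ color classes (stable sets) have sizes pairwise differing by at most one. A graph $G$ is $q$-almost equitably $k$-colorable if there is a set $X$ of at most $q$ vertices such that $G\setminus X$ has an equitable $k$-coloring. *)

(* Defs.v *)
From mathcomp Require Import all_boot.
Set Implicit Arguments. Unset Strict Implicit. Unset Printing Implicit Defensive.

Section Defs.
Variable T : finType.

Definition simple_graph (e : rel T) : Prop := symmetric e /\ irreflexive e.

Definition proper_on (e : rel T) (V : {set T}) (k : nat) (f : T -> 'I_k) : Prop :=
  forall x y, x \in V -> y \in V -> e x y -> f x != f y.

Definition colorable (e : rel T) (k : nat) : Prop :=
  exists f : T -> 'I_k, proper_on e [set: T] f.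

Definition color_class (V : {set T}) (k : nat) (f : T -> 'I_k) (i : 'I_k) : {set T} :=
  [set x in V | f x == i].

Definition equitable_on (e : rel T) (V : {set T}) (k : nat) (f : T -> 'I_k) : Prop :=
  proper_on e V f /\
  forall i j : 'I_k, #|color_class V f i| <= #|color_class V f j| + 1.

Definition almost_equitably_colorable (e : rel T) (q k : nat) : Prop :=
  exists X : {set T}, #|X| <= q /\
    exists f : T -> 'I_k, equitable_on e (~: X) f.

Definition path_decomposition (e : rel T) (B : seq {set T}) : Prop :=
  [/\ forall x, exists2 b, b \in B & x \in b,
      forall x y, e x y -> exists2 b, b \in B & (x \in b) && (y \in b)
    & forall x i j l, i <= j -> j <= l ->
        x \in nth set0 B i -> x \in nth set0 B l -> x \in nth set0 B j].

Definition pathwidth_le (e : rel T) (p : nat) : Prop :=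
  exists B : seq {set T}, path_decomposition e B /\ forall b, b \in B -> #|b| <= p.+1.

End Defs.

(* Main.v *)
Require Import Defs.
From mathcomp Require Import all_boot zify.
Set Implicit Arguments. Unset Strict Implicit. Unset Printing Implicit Defensive.

Section Basics.
Variable T : finType.
Variable k : nat.

Lemma card_sum_classes (V : {set T}) (f : T -> 'I_k) :
  #|V| = \sum_i #|color_class V f i|.
Proof.
rewrite -sum1_card (partition_big f predT) //=.
apply: eq_bigr => i _; rewrite -sum1_card; apply: eq_bigl => x.
by rewrite /color_class inE.
Qed.

Lemma proper_sub (e : rel T) (V W : {set T}) (f : T -> 'I_k) :
  W \subset V -> proper_on e V f -> proper_on e W f.
Proof. by move=> /subsetP sWV pf x y xW yW; apply: pf; apply: sWV. Qed.

Lemma cc_setD1 (V : {set T}) (f : T -> 'I_k) x i :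
  color_class (V :\ x) f i = color_class V f i :\ x.
Proof. by apply/setP=> y; rewrite !inE andbA. Qed.

Lemma trim (g : 'I_k -> nat) : forall n (V : {set T}) (f : T -> 'I_k),
  #|V| <= n -> (forall i, g i <= #|color_class V f i|) ->
  exists2 W : {set T}, W \subset V & forall i, #|color_class W f i| = g i.
Proof.
elim=> [|n IH] V f cV hg.
- exists V => // i; apply/eqP; rewrite eqn_leq hg andbT.
  apply: leq_trans (subset_leq_card _) (leq_trans cV (leq0n _)).
  by apply/subsetP=> x; rewrite inE => /andP[].
- case: (boolP [forall i, g i == #|color_class V f i|]) => [/forallP H|].
    by exists V => // i; apply/eqP; rewrite eq_sym; apply: H.
  rewrite negb_forall => /existsP [i Hi].
  have lti : g i < #|color_class V f i| by rewrite ltn_neqAle Hi hg.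
  have /card_gt0P [x xi] : 0 < #|color_class V f i| by apply: leq_ltn_trans lti.
  have xV : x \in V by move: xi; rewrite inE => /andP[].
  have cV' : #|V :\ x| <= n by move: cV; rewrite (cardsD1 x V) xV.
  have hg' : forall j, g j <= #|color_class (V :\ x) f j|.
    move=> j; rewrite cc_setD1; have := cardsD1 x (color_class V f j).
    case: (boolP (x \in color_class V f j)) => xj.
      have ji : j = i by move: xj xi; rewrite !inE => /andP[_ /eqP <-] /andP[_ /eqP].
      by subst j; move: lti; lia.
    by have := hg j; lia.
  have [W sW HW] := IH _ f cV' hg'.
  exists W => //; apply: subset_trans sW _; exact: subsetDl.
Qed.
End Basics.
Lemma ivt (g : nat -> nat) v : forall N, v <= g 0 -> g N <= v ->
  (forall t, g t <= g t.+1 + 1) -> exists2 t, t <= N & g t = v.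
Proof.
elim=> [|N IH] h0 hN hs; first by exists 0 => //; apply/eqP; rewrite eqn_leq hN h0.
case: (leqP (g N) v) => hv.
  by have [t tN gt] := IH h0 hv hs; exists t => //; apply: leqW.
exists N.+1 => //; have := hs N; lia.
Qed.

Section Sw.
Variable k : nat.
Definition sw (a b c : 'I_k) := if c == a then b else if c == b then a else c.
Lemma swK a b : involutive (sw a b).
Proof.
move=> c; rewrite /sw; case: (eqVneq c a) => [->|ca]; rewrite ?eqxx.
  by case: (eqVneq b a) => [->|ba]; rewrite ?eqxx.
case: (eqVneq c b) => [->|cb]; rewrite ?eqxx //.
by rewrite (negPf ca) (negPf cb).
Qed.
Lemma sw_fix a b c d : c != a -> c != b -> (sw a b d == c) = (d == c).
Proof.
move=> ca cb; rewrite /sw; case: (eqVneq d a) => [->|da].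
  by rewrite (eq_sym a) (negPf ca) eq_sym (negPf cb).
case: (eqVneq d b) => [->|db] //.
by rewrite (eq_sym b) (negPf cb) eq_sym (negPf ca).
Qed.
Lemma sw_a a b d : (sw a b d == a) = (d == b).
Proof.
rewrite /sw; case: (eqVneq d a) => [->|da].
  by rewrite eq_sym.
case: (eqVneq d b) => [_|db]; first by rewrite eqxx.
by rewrite (negPf da).
Qed.
End Sw.
Lemma mem_cc (T : finType) k (V : {set T}) (f : T -> 'I_k) c x :
  (x \in color_class V f c) = (x \in V) && (f x == c).
Proof. by rewrite inE. Qed.

Section Op.
Variables (T : finType) (e : rel T) (p : nat) (B : seq {set T}).
Hypotheses (esym : symmetric e) (hB : path_decomposition e B)
  (hsz : forall b, b \in B -> #|b| <= p.+1).

Definition lf (x : T) := find (fun b : {set T} => x \in b) B.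
Definition kap (x : T) := lf x * #|T| + enum_rank x.

Lemma has_x (x : T) : has (fun b : {set T} => x \in b) B.
Proof. by case: hB => cov _ _; have [b bB xb] := cov x; apply/hasP; exists b. Qed.

Lemma lf_lt (x : T) : lf x < size B.
Proof. by rewrite /lf -has_find has_x. Qed.

Lemma in_lf (x : T) : x \in nth set0 B (lf x).
Proof. exact: (nth_find set0 (has_x x)). Qed.

Lemma lf_min (x : T) c : x \in nth set0 B c -> lf x <= c.
Proof.
move=> xc; rewrite leqNgt; apply/negP => /(before_find set0) /=.
by rewrite xc.
Qed.

Lemma rank_lt (x : T) : enum_rank x < #|T|.
Proof. exact: ltn_ord. Qed.

Lemma kap_inj : injective kap.
Proof.
move=> x y; rewrite /kap => H.
have : (lf x * #|T| + enum_rank x) %% #|T| = (lf y * #|T| + enum_rank y) %% #|T| by rewrite H.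
rewrite !modnMDl !modn_small ?rank_lt // => /val_inj.
exact: enum_rank_inj.
Qed.

Lemma kap_lt (x : T) : kap x < size B * #|T|.
Proof.
have := lf_lt x; have := rank_lt x; rewrite /kap; nia.
Qed.

Lemma lf_le (x y : T) : kap x <= kap y -> lf x <= lf y.
Proof.
have := rank_lt x; have := rank_lt y; rewrite /kap => rx ry H.
rewrite leqNgt; apply/negP => lt.
have : (lf y).+1 * #|T| <= lf x * #|T| by rewrite leq_mul2r lt orbT.
nia.
Qed.

Definition Pst (V : {set T}) th := [set x in V | kap x < th].
Definition Fst (V : {set T}) th :=
  [set x in Pst V th | [forall y, ((y \in V) && e x y) ==> (kap y < th)]].
Definition Ust (V : {set T}) th := V :\: Pst V th.

Lemma boundary_small V th : #|Pst V th :\: Fst V th| <= p.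
Proof.
case: (posnP #|Pst V th :\: Fst V th|) => [->//|].
case/card_gt0P => x0; rewrite !inE => /andP[/negP nF /andP[x0V x0t]].
have : ~~ [forall y, ((y \in V) && e x0 y) ==> (kap y < th)].
  by apply/negP => H; apply: nF; rewrite x0V x0t.
rewrite negb_forall => /existsP [y0]; rewrite negb_imply -leqNgt => /andP[_ y0t].
case: (@arg_minnP _ y0 (fun z => th <= kap z) kap y0t) => w wt wmin.
case: hB => _ hedge hconv.
have wB : nth set0 B (lf w) \in B by apply: mem_nth; apply: lf_lt.
have wb := in_lf w.
have sub : Pst V th :\: Fst V th \subset nth set0 B (lf w) :\ w.
  apply/subsetP => x; rewrite !inE => /andP[xnF /andP[xV xt]].
  have : ~~ [forall y, ((y \in V) && e x y) ==> (kap y < th)].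
    by apply/negP => H; move: xnF; rewrite xV xt H.
  rewrite negb_forall => /existsP [y]; rewrite negb_imply -leqNgt => /andP[/andP[yV exy] yt].
  apply/andP; split.
    by apply/negP => /eqP xw; subst x; move: xt; rewrite ltnNge wt.
  have [b bB /andP[xb yb]] := hedge x y exy.
  have bnth : nth set0 B (index b B) = b by apply: nth_index.
  have ly : lf y <= index b B by apply: lf_min; rewrite bnth.
  have lwy : lf w <= lf y by apply: lf_le; apply: wmin.
  have lxw : lf x <= lf w by apply: lf_le; apply: ltnW; apply: leq_trans xt wt.
  apply: (hconv x (lf x) (lf w) (index b B)) => //.
  - exact: leq_trans lwy ly.
  - exact: in_lf.
  - by rewrite bnth.
have := subset_leq_card sub; have := hsz wB.
rewrite (cardsD1 w (nth set0 B (lf w))) wb; lia.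
Qed.

Variable k : nat.

Definition gset V (f : T -> 'I_k) a b th :=
  (Fst V th :&: color_class V f a) :|: (Ust V th :&: color_class V f b).

Lemma card_kap th : #|[set x | kap x == th]| <= 1.
Proof.
case: (posnP #|[set x | kap x == th]|) => [->//|].
case/card_gt0P => x0; rewrite inE => /eqP h0.
have -> : [set x | kap x == th] = [set x0].
  apply/setP => x; rewrite !inE; apply/eqP/eqP => [h|->//].
  by apply: kap_inj; rewrite h h0.
by rewrite cards1.
Qed.

Lemma gset_step V f a b th : #|gset V f a b th| <= #|gset V f a b th.+1| + 1.
Proof.
have sub : gset V f a b th \subset gset V f a b th.+1 :|: [set x | kap x == th].
  apply/subsetP => x; rewrite /gset !inE.
  case/orP => /andP[].
    move=> /andP[/andP[xV xt] /forallP H] xa; rewrite xa xV ltnS ltnW //=.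
    rewrite andbT; apply/orP; left; apply/orP; left; apply/forallP => y; apply/implyP => /(implyP (H y)).
    exact: ltnW.
  move=> /andP[xnP xV] xb; rewrite xb xV /=.
  move: xnP; rewrite xV /= -leqNgt => xt.
  case: (ltngtP (kap x) th) => [|h|->]; first by rewrite ltnNge xt.
    by rewrite ltnS leqNgt h.
  by rewrite orbT.
have := subset_leq_card sub; have := cardsUI (gset V f a b th.+1) [set x | kap x == th].
have := card_kap th; lia.
Qed.

Lemma gset0 V f a b : gset V f a b 0 = color_class V f b.
Proof.
apply/setP => x; rewrite /gset !inE ltn0 /= andbF /=.
by case: (x \in V).
Qed.

Lemma gsetN V f a b : gset V f a b (size B * #|T|) = color_class V f a.
Proof.
apply/setP => x; rewrite /gset !inE kap_lt /=.
case: (x \in V) => //=; rewrite orbF.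
suff -> : [forall y, (y \in V) && e x y ==> (kap y < size B * #|T|)] by [].
by apply/forallP => y; apply/implyP => _; apply: kap_lt.
Qed.


Lemma op V (f : T -> 'I_k) a b v : proper_on e V f ->
  #|color_class V f a| <= v <= #|color_class V f b| ->
  exists V' : {set T}, exists f' : T -> 'I_k,
  [/\ V' \subset V, #|V :\: V'| <= p, proper_on e V' f', #|color_class V' f' a| = v &
      forall c, c != a -> c != b -> color_class V' f' c = color_class V f c].
Proof.
move=> pf /andP[va vb].
have h0 : v <= #|gset V f a b 0| by rewrite gset0.
have hN : #|gset V f a b (size B * #|T|)| <= v by rewrite gsetN.
have [th _ hth] := @ivt (fun t => #|gset V f a b t|) v (size B * #|T|)
   h0 hN (gset_step V f a b).
set S := Pst V th :\: Fst V th.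
set V' := V :\: (S :&: (color_class V f a :|: color_class V f b)).
have inV' x : (x \in V') = (x \in V) && ~~ ((x \in S) && ((f x == a) || (f x == b))).
  rewrite /V' in_setD in_setI in_setU andbC !mem_cc.
  by case: (x \in V).
have F1 x : x \in V' -> kap x < th -> (x \in Fst V th) || ((f x != a) && (f x != b)).
  rewrite inV' => /andP[xV] + xt; rewrite /S in_setD.
  have -> : x \in Pst V th by rewrite inE xV xt.
  by case: (x \in Fst V th) => //=; rewrite negb_or.
have F2 x y : x \in Fst V th -> y \in V -> e x y -> kap y < th.
  by rewrite !inE => /andP[_ /forallP H] yV exy; apply: (implyP (H y)); rewrite yV exy.
have sV' : V' \subset V by apply: subsetDl.
exists V', (fun x => if x \in Ust V th then sw a b (f x) else f x).
split => //.
- apply: leq_trans (boundary_small V th).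
  apply: subset_leq_card; apply/subsetP => x.
  by rewrite in_setD inV' => /andP[+ xV]; rewrite xV /= negbK => /andP[].
- move=> x y xV' yV' exy.
  have xV := subsetP sV' x xV'; have yV := subsetP sV' y yV'.
  rewrite /Ust !inE xV yV /=.
  case hx: (kap x < th); case hy: (kap y < th) => /=.
  + exact: pf.
  + have := F1 x xV' hx; case/orP => [xF|/andP[xa xb]].
      by have := F2 x y xF yV exy; rewrite hy.
    by rewrite eq_sym sw_fix // eq_sym; apply: pf.
  + have := F1 y yV' hy; case/orP => [yF|/andP[ya yb]].
      by have := F2 y x yF xV; rewrite esym hx => /(_ exy).
    by rewrite sw_fix //; apply: pf.
  + by rewrite (inj_eq (can_inj (swK a b))); apply: pf.
- rewrite -hth; apply: eq_card => x.
  rewrite mem_cc /gset in_setU !in_setI !mem_cc.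
  have Ueq : (x \in Ust V th) = (x \in V) && ~~ (kap x < th) by rewrite !inE; case: (x \in V); rewrite ?andbT.
  have Fsub : x \in Fst V th -> (x \in V) && (kap x < th).
    by rewrite !inE => /andP[/andP[-> ->]].
  case: (boolP (x \in V')) => xV' /=.
    have xV := subsetP sV' x xV'; rewrite Ueq xV /=.
    case hx: (kap x < th) => /=.
      have := F1 x xV' hx.
      case: (boolP (x \in Fst V th)) => xF /=; first by rewrite orbF.
      by case/andP => /negPf -> _.
    have xnF : x \notin Fst V th by apply/negP => /Fsub; rewrite hx andbF.
    by rewrite (negPf xnF) sw_a.
  move: xV'; rewrite inV' negb_and negbK.
  case/orP => [xnV|]; first by rewrite Ueq (negPf xnV) /= !andbF.
  case/andP; rewrite /S in_setD => /andP[xnF xP] _.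
  move: xP; rewrite inE => /andP[xV xt].
  by rewrite (negPf xnF) Ueq xV xt.
- move=> c ca cb; apply/setP => x; rewrite !mem_cc.
  case: (boolP (x \in V')) => xV' /=.
    have xV := subsetP sV' x xV'; rewrite xV /=.
    by case: ifP => // _; rewrite sw_fix.
  move: xV'; rewrite inV' negb_and negbK.
  case/orP => [xnV|]; first by rewrite (negPf xnV).
  case/andP => _ /orP [] /eqP ->; rewrite andbC.
    by rewrite eq_sym (negPf ca).
  by rewrite eq_sym (negPf cb).
Qed.
End Op.

Section Main.
Variables (T : finType) (e : rel T) (p : nat) (B : seq {set T}).
Hypotheses (esym : symmetric e) (hB : path_decomposition e B)
  (hsz : forall b, b \in B -> #|b| <= p.+1).
Variables (k m r : nat).
Hypotheses (hr : r < k) (hT : #|T| = m * k + r + p * (k - 1)).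

Definition Inv (V : {set T}) (f : T -> 'I_k) (F : {set 'I_k}) :=
 [/\ proper_on e V f, #|~: V| <= p * #|F|,
     forall i, i \in F -> m <= #|color_class V f i| <= m.+1 &
     \sum_(i in F) #|color_class V f i| = #|F| * m + minn #|F| r].

Definition tgt (F : {set 'I_k}) := m + (#|F| < r).

Lemma sum_split (V : {set T}) (f : T -> 'I_k) (F : {set 'I_k}) :
  #|V| = \sum_(i in F) #|color_class V f i| + \sum_(i in ~: F) #|color_class V f i|.
Proof.
rewrite (card_sum_classes V f) (bigID (fun i => i \in F)) /=.
congr (_ + _); apply: eq_bigl => i; by rewrite inE.
Qed.

Lemma cardF (F : {set 'I_k}) : #|F| + #|~: F| = k.
Proof. by rewrite cardsC card_ord. Qed.

Lemma step V f F s : Inv V f F -> s \notin F -> #|color_class V f s| < tgt F ->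
  exists V' f', Inv V' f' (s |: F).
Proof.
case=> pf hV hfix hsum sF hs.
have hk := cardF F.
have u1 : 0 < #|~: F| by apply/card_gt0P; exists s; rewrite inE.
have [c cF hc] : exists2 c, c \notin F & tgt F <= #|color_class V f c|.
  case: (boolP [exists c, (c \notin F) && (tgt F <= #|color_class V f c|)]) => [/existsP [c /andP[cF hc]]|]; first by exists c.
  rewrite negb_exists => /forallP H; exfalso.

  have H2 : \sum_(i in ~: F) (#|color_class V f i| + 1) <= \sum_(i in ~: F) tgt F.
    apply: leq_sum => i; rewrite inE => iF; have := H i; rewrite iF /= addn1 -ltnNge; done.
  move: H2; rewrite sum_nat_const big_split /= sum1_card.
  have := sum_split V f F; rewrite hsum.
  have := cardsC V; rewrite hT.
  have : p * #|F| <= p * (k - 1) by apply: leq_mul => //; lia.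
  have km : m * k = m * #|F| + m * #|~: F| by rewrite -mulnDr hk.
  have e1 : #|~: F| * m.+1 = m * #|~: F| + #|~: F| by rewrite mulnSr mulnC.
  have e2 : #|~: F| * m = m * #|~: F| by rewrite mulnC.
  have e3 : #|F| * m = m * #|F| by rewrite mulnC.
  rewrite /tgt; case: ltnP => hFr; rewrite ?addn1 ?addn0; move=> h1 h2 h3 h4; set S := \sum_(i in ~: F) _ in h3 h4; set u := #|~: F| in h4 e1 e2 km hk u1; set fF := #|F| in h1 h3 e3 km hk hV hFr; set cV := #|V| in h2 h3; set cnV := #|~: V| in h2 hV; clearbody S u fF cV cnV; lia.
have cs : c != s by apply/eqP => E; subst c; move: hc; rewrite leqNgt hs.
have [|V' [f' [sV' hVV' pf' ha hother]]] := op esym hB hsz (a := s) (b := c) (v := tgt F) pf.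
  by rewrite (ltnW hs) hc.
exists V', f'; split => //.
- have := cardsC V; have := cardsC V'; have := cardsID V' V.
  rewrite (setIidPr sV') cardsU1 sF.
  lia.
- move=> i; rewrite in_setU1 => /orP [/eqP ->|iF].
    by rewrite ha /tgt; case: (_ < r); rewrite ?addn0 ?addn1 leqnn ?leqnSn ?andbT.
  rewrite hother ?hfix //.
    by apply/eqP => E; subst; rewrite iF in sF.
  by apply/eqP => E; subst; rewrite iF in cF.
- rewrite big_setU1 //= ha cardsU1 sF.
  rewrite (eq_bigr (fun i => #|color_class V f i|)); last first.
    move=> i iF; rewrite hother //.
      by apply/eqP => E; subst; rewrite iF in sF.
    by apply/eqP => E; subst; rewrite iF in cF.
  rewrite hsum /tgt; case: ltnP => h; lia.
Qed.

Lemma loop d : forall (V : {set T}) (f : T -> 'I_k) (F : {set 'I_k}), k - #|F| <= d -> Inv V f F ->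
  exists V', exists f', exists F', Inv V' f' F' /\
    forall i, i \notin F' -> tgt F' <= #|color_class V' f' i|.
Proof.
elim: d => [|d IH] V f F hd inv.
  exists V, f, F; split => // i iF.
  have := cardF F; have : 0 < #|~: F| by apply/card_gt0P; exists i; rewrite inE.
  lia.
case: (boolP [exists i, (i \notin F) && (#|color_class V f i| < tgt F)]).
  case/existsP => s /andP[sF hs].
  have [V' [f' inv']] := step inv sF hs.
  apply: (IH _ _ _ _ inv').
  rewrite cardsU1 sF; lia.
rewrite negb_exists => /forallP H.
exists V, f, F; split => // i iF.
by have := H i; rewrite iF /= -leqNgt.
Qed.

End Main.

Theorem theorem4 (T : finType) (e : rel T) (k p : nat) :
  simple_graph e -> colorable e k -> pathwidth_le e p ->
  almost_equitably_colorable e (p * (k - 1)) k.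
Proof.
move=> [esym _] [f0 pf0] [B [hB hsz]].
case: (leqP #|T| (p * (k - 1))) => hn.
  exists setT; split; first by rewrite cardsT.
  exists f0; split; first by move=> x y; rewrite setCT inE.
  have E l : color_class (~: setT) f0 l = set0 by apply/setP => x; rewrite !inE.
  by move=> i j; rewrite !E cards0.
have k0 : 0 < k.
  have /card_gt0P [x _] : 0 < #|T| by apply: leq_ltn_trans hn.
  exact: (leq_ltn_trans (leq0n _) (ltn_ord (f0 x))).
set N0 := #|T| - p * (k - 1).
have hr : N0 %% k < k by rewrite ltn_pmod.
have hT : #|T| = N0 %/ k * k + N0 %% k + p * (k - 1).
  by rewrite -divn_eq /N0 subnK // ltnW.
have inv0 : Inv e p (N0 %/ k) (N0 %% k) setT f0 set0.
  split.
  - by move=> x y _ _; apply: pf0; rewrite inE.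
  - by rewrite setCT cards0.
  - by move=> i; rewrite inE.
  - by rewrite big_set0 cards0 mul0n min0n.
have [V [f [F [[pf hV hfix hsum] hU]]]] := loop esym hB hsz hr hT (d := k) (leq_subr _ _) inv0.
set m := N0 %/ k in hT hfix hsum hU inv0 *.
set r := N0 %% k in hr hT hsum hU inv0 *.
pose g (i : 'I_k) := if i \in F then #|color_class V f i| else tgt m r F.
have gb i : m <= g i <= m.+1.
  rewrite /g; case: ifP => iF; first exact: hfix.
  by rewrite /tgt; case: (_ < r); rewrite ?addn0 ?addn1 leqnn ?leqnSn ?andbT.
have hgV : forall i, g i <= #|color_class V f i|.
  by move=> i; rewrite /g; case: ifP => // /negbT; apply: hU.
have [W sW hW] := @trim _ _ g #|V| V f (leqnn _) hgV.
exists (~: W); split.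
  have := cardsC W; rewrite hT.
  have cW := sum_split W f F.
  have s1 : \sum_(i in F) #|color_class W f i| = \sum_(i in F) #|color_class V f i|.
    by apply: eq_bigr => i iF; rewrite hW /g iF.
  have s2 : \sum_(i in ~: F) #|color_class W f i| = \sum_(i in ~: F) tgt m r F.
    by apply: eq_bigr => i; rewrite in_setC => iF; rewrite hW /g (negPf iF).
  rewrite s1 s2 in cW.
  move: cW; rewrite hsum sum_nat_const.
  have hk := cardF F.
  have km : m * k = m * #|F| + m * #|~: F| by rewrite -mulnDr hk.
  have e1 : #|~: F| * m.+1 = m * #|~: F| + #|~: F| by rewrite mulnSr mulnC.
  have e2 : #|~: F| * m = m * #|~: F| by rewrite mulnC.
  have e3 : #|F| * m = m * #|F| by rewrite mulnC.
  rewrite /tgt; case: ltnP => hFr; rewrite ?addn1 ?addn0; move=> h1 h2;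
  set u := #|~: F| in h1 e1 e2 km hk; set fF := #|F| in h1 e3 km hk hFr;
  set cW := #|W| in h1 h2; set cnW := #|~: W| in h2 *; clearbody u fF cW cnW; lia.
exists f; split; rewrite setCK; first exact: proper_sub sW pf.
move=> i j; rewrite !hW; have := gb i; have := gb j; lia.
Qed.
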